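(* The category $\boxplus$ is a generalized Reedy category with $\boxplus^-$ the wide subcategory of surjective $\boxplus$-morphisms, $\boxplus^+$ the wide subcategory of injective $\boxplus$-morphisms, and $\deg([1]^n)=n$ for $n=0,1,2,\dots$.
   Context: $[1]=\{0<1\}$, $[1]^n$ the product poset ($[1]^0=[0]$). An interval in a poset is a non-empty subset $[x,z]=\{y:x\leq y\leq z\}$. $\boxplus$ is the category whose objects are the $[1]^n$ ($n\geq0$) and whose morphisms are the monotone functions mapping every interval onto an interval. A generalized Reedy category is a small category $\mathcal{S}$ with wide subcategories $\mathcal{S}^-,\mathcal{S}^+$ and a function $\deg$ from objects to $\mathbb{N}$ such that: (i) $\mathcal{S}^-\cap\mathcal{S}^+$ is the core (groupoid of isomorphisms) of $\mathcal{S}$; (ii) for each $\mathcal{S}^-$-morphism $o_1\to o_2$, $\deg(o_1)\geq\deg(o_2)$; (iii) for each $\mathcal{S}^+$-morphism $o_1\to o_2$, $\deg(o_1)\leq\deg(o_2)$; (iv) a morphism $o_1\to o_2$ in $\mathcal{S}^-$ or $\mathcal{S}^+$ lies in both if $\deg(o_1)=\deg(o_2)$; (v) for each $\mathcal{S}^-$-morphism $\zeta$, an isomorphism $\gamma$ with $\gamma\zeta=\zeta$ is an identity; (vi) every $\mathcal{S}$-morphism factors as an $\mathcal{S}^-$-morphism followed by an $\mathcal{S}^+$-morphism, uniquely up to isomorphism. *)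

(* Defs.v *)
From mathcomp Require Import all_boot.
Set Implicit Arguments. Unset Strict Implicit. Unset Printing Implicit Defensive.

(* The poset [1]^n, represented as bool-valued functions on 'I_n
   (false = 0 < true = 1), with the product order. [1]^0 = [0]. *)
Definition cube (n : nat) : finType := {ffun 'I_n -> bool}.

Definition cle (n : nat) (x y : cube n) : bool := [forall i, x i ==> y i].

Definition interval (n : nat) (x z : cube n) : {set cube n} :=
  [set y | cle x y && cle y z].

Definition box_mor (m n : nat) (f : cube m -> cube n) : Prop :=
  (forall x y, cle x y -> cle (f x) (f y)) /\
  (forall x z, cle x z ->
     exists a b, cle a b /\ f @: interval x z = interval a b).

Definition surj (m n : nat) (f : cube m -> cube n) : Prop :=
  forall y, exists x, f x = y.

Definition box_iso (m n : nat) (f : cube m -> cube n) : Prop :=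
  box_mor f /\ exists g : cube n -> cube m,
    box_mor g /\ cancel f g /\ cancel g f.

(* Generalized Reedy structure on boxplus (objects indexed by n, [1]^n),
   given wide subcategories Sm (S^-) and Sp (S^+), described by predicates
   on morphisms, and a degree function deg. *)
Definition gen_reedy_box
  (Sm Sp : forall m n : nat, (cube m -> cube n) -> Prop) (deg : nat -> nat)
  : Prop :=
  (forall n, box_mor (fun x : cube n => x)) /\
  (forall m n p (f : cube m -> cube n) (g : cube n -> cube p),
      box_mor f -> box_mor g -> box_mor (fun x => g (f x))) /\
  (forall n, Sm n n (fun x => x)) /\ (forall n, Sp n n (fun x => x)) /\
  (forall m n (f g : cube m -> cube n), (forall x, f x = g x) ->
      (Sm m n f <-> Sm m n g) /\ (Sp m n f <-> Sp m n g)) /\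
  (forall m n (f : cube m -> cube n), Sm m n f -> box_mor f) /\
  (forall m n (f : cube m -> cube n), Sp m n f -> box_mor f) /\
  (forall m n p (f : cube m -> cube n) (g : cube n -> cube p),
      Sm m n f -> Sm n p g -> Sm m p (fun x => g (f x))) /\
  (forall m n p (f : cube m -> cube n) (g : cube n -> cube p),
      Sp m n f -> Sp n p g -> Sp m p (fun x => g (f x))) /\
  (forall m n (f : cube m -> cube n),
      box_mor f -> ((Sm m n f /\ Sp m n f) <-> box_iso f)) /\
  (forall m n (f : cube m -> cube n), Sm m n f -> deg n <= deg m) /\
  (forall m n (f : cube m -> cube n), Sp m n f -> deg m <= deg n) /\
  (forall m n (f : cube m -> cube n), (Sm m n f \/ Sp m n f) ->
      deg m = deg n -> Sm m n f /\ Sp m n f) /\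
  (forall m n (zeta : cube m -> cube n) (gamma : cube n -> cube n),
      Sm m n zeta -> box_iso gamma -> (forall x, gamma (zeta x) = zeta x) ->
      forall y, gamma y = y) /\
  (forall m n (f : cube m -> cube n), box_mor f ->
      exists k (p : cube m -> cube k) (i : cube k -> cube n),
        Sm m k p /\ Sp k n i /\ forall x, f x = i (p x)) /\
  (forall m n k k' (p : cube m -> cube k) (i : cube k -> cube n)
          (p' : cube m -> cube k') (i' : cube k' -> cube n),
      Sm m k p -> Sp k n i -> Sm m k' p' -> Sp k' n i' ->
      (forall x, i (p x) = i' (p' x)) ->
      exists theta : cube k -> cube k',
        box_iso theta /\ (forall x, theta (p x) = p' x) /\
        (forall y, i' (theta y) = i y)).

(* Main.v *)
Require Import Defs.
From mathcomp Require Import all_boot.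
From Stdlib Require Import FunctionalExtensionality.
Set Implicit Arguments. Unset Strict Implicit. Unset Printing Implicit Defensive.

Lemma cleP n (x y : cube n) : reflect (forall i, x i -> y i) (cle x y).
Proof.
apply: (iffP forallP) => H i.
  by move=> xi; move/implyP: (H i); apply.
by apply/implyP; apply: H.
Qed.

Lemma cle_refl n (x : cube n) : cle x x.
Proof. by apply/cleP. Qed.

Lemma cle_trans n (x y z : cube n) : cle x y -> cle y z -> cle x z.
Proof. by move=> /cleP h1 /cleP h2; apply/cleP => i /h1 /h2. Qed.

Lemma intvE n (x y z : cube n) : (y \in interval x z) = cle x y && cle y z.
Proof. by rewrite inE. Qed.

Definition bot n : cube n := [ffun _ : 'I_n => false].
Definition top n : cube n := [ffun _ : 'I_n => true].

Lemma top_max n (x : cube n) : cle x (top n).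
Proof. by apply/cleP => i; rewrite ffunE. Qed.
Lemma bot_min n (x : cube n) : cle (bot n) x.
Proof. by apply/cleP => i; rewrite ffunE. Qed.

Definition rinv m n (f : cube m -> cube n) (y : cube n) : cube m :=
  odflt (bot m) [pick x | f x == y].

Lemma rinvK m n (f : cube m -> cube n) : surj f -> cancel (rinv f) f.
Proof.
move=> sf y; rewrite /rinv; case: pickP => [x /eqP //| H].
by case: (sf y) => x e; move: (H x); rewrite e eqxx.
Qed.

Lemma lift_le m n (p : cube m -> cube n) : box_mor p -> surj p ->
  forall x1 y2, cle (p x1) y2 -> exists x2, cle x1 x2 /\ p x2 = y2.
Proof.
move=> [mono intv] sp x1 y2 h.
have [c [d [cd E]]] := intv x1 (top m) (top_max x1).
have : p x1 \in interval c d by rewrite -E; apply: imset_f; rewrite intvE cle_refl top_max.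
rewrite intvE => /andP[h1 h2].
have : p (top m) \in interval c d by rewrite -E; apply: imset_f; rewrite intvE top_max cle_refl.
rewrite intvE => /andP[h3 h4].
have : y2 \in p @: interval x1 (top m).
  rewrite E intvE (cle_trans h1 h) /=.
  case: (sp y2) => z <-; exact: cle_trans (mono _ _ (top_max z)) h4.
by case/imsetP => x2; rewrite intvE => /andP[h5 _] ->; exists x2.
Qed.

Lemma iso_mor m n (f : cube m -> cube n) (g : cube n -> cube m) :
  (forall x y, cle x y -> cle (f x) (f y)) ->
  (forall x y, cle x y -> cle (g x) (g y)) ->
  cancel f g -> cancel g f -> box_mor f.
Proof.
move=> mf mg fK gK; split => // x z xz; exists (f x), (f z); split; first exact: mf.
apply/setP => w; rewrite intvE; apply/imsetP/andP.
  by case=> y; rewrite intvE => /andP[h1 h2] ->; split; apply: mf.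
case=> h1 h2; exists (g w); last by rewrite gK.
by rewrite intvE -(fK x) -(fK z) !mg.
Qed.

Lemma refl_mono m n (f : cube m -> cube n) : box_mor f -> surj f -> injective f ->
  forall x y, cle (f x) (f y) -> cle x y.
Proof.
move=> bf sf inj x y h; have [x2 [h1 /inj e]] := lift_le bf sf h.
by rewrite -e.
Qed.

Definition ev n (S : {set 'I_n}) (t : 'I_#|S|) : 'I_n := enum_val t.
Definition proj n (S : {set 'I_n}) (x : cube n) : cube #|S| := [ffun t => x (ev t)].
Definition fill n (S : {set 'I_n}) (c : cube n) (w : cube #|S|) : cube n :=
  [ffun j => c j || [exists t, (ev t == j) && w t]].
Arguments fill {n} S c w.

Lemma fill_ev n (S : {set 'I_n}) c w t : fill S c w (ev t) = c (ev t) || w t.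
Proof.
rewrite ffunE; congr (_ || _); apply/existsP/idP.
  by case=> t' /andP[/eqP /enum_val_inj ->].
by move=> wt; exists t; rewrite eqxx wt.
Qed.

Lemma fill_out n (S : {set 'I_n}) c w j : j \notin S -> fill S c w j = c j.
Proof.
move=> jS; rewrite ffunE; case: existsP => [[t /andP[/eqP e _]]|_]; last by rewrite orbF.
by move: jS; rewrite -e /ev enum_valP.
Qed.

Lemma in_S n (S : {set 'I_n}) j : j \in S -> exists t : 'I_#|S|, ev t = j.
Proof. by move=> jS; exists (enum_rank_in jS j); rewrite /ev enum_rankK_in. Qed.

Lemma proj_mono n (S : {set 'I_n}) u v : cle u v -> cle (proj S u) (proj S v).
Proof. by move=> /cleP h; apply/cleP => t; rewrite !ffunE => /h. Qed.

Lemma fill_mono n (S : {set 'I_n}) c u v : cle u v -> cle (fill S c u) (fill S c v).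
Proof.
move=> /cleP h; apply/cleP => j; rewrite !ffunE => /orP[->//|/existsP[t /andP[e /h ut]]].
by apply/orP; right; apply/existsP; exists t; rewrite e ut.
Qed.

Lemma fill_le n (S : {set 'I_n}) c d w : cle c d -> cle w (proj S d) -> cle (fill S c w) d.
Proof.
move=> /cleP h1 /cleP h2; apply/cleP => j; rewrite ffunE => /orP[/h1//|/existsP[t /andP[/eqP <- /h2]]].
by rewrite ffunE.
Qed.

Lemma fill_ge n (S : {set 'I_n}) c w : cle c (fill S c w).
Proof. by apply/cleP => j cj; rewrite ffunE cj. Qed.

Lemma proj_fill n (S : {set 'I_n}) c w : cle (proj S c) w -> proj S (fill S c w) = w.
Proof.
move=> /cleP h; apply/ffunP => t; rewrite ffunE fill_ev.
by case e: (c (ev t)) => //=; rewrite h // ffunE.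
Qed.

Lemma bool_aux (x y : bool) : (x -> y) -> x != y -> x = false /\ y = true.
Proof. by case: x; case: y => //= /(_ erefl). Qed.

Lemma bool_eq (x y : bool) : (x -> y) -> (y -> x) -> x = y.
Proof. case: x; case: y => //= h1 h2; [have := h1 erefl | have := h2 erefl]; done. Qed.

Lemma factor m n (f : cube m -> cube n) : box_mor f ->
  exists k (p : cube m -> cube k) (i : cube k -> cube n),
    (box_mor p /\ surj p) /\ (box_mor i /\ injective i) /\ forall x, f x = i (p x).
Proof.
move=> [mono intv].
have [a [b [ab Himg]]] := intv (bot m) (top m) (top_max _).
pose S := [set j | a j != b j].
have F1 x : cle a (f x) && cle (f x) b.
  by rewrite -intvE -Himg; apply: imset_f; rewrite intvE bot_min top_max.
have F2 (t : 'I_#|S|) : a (ev t) = false /\ b (ev t) = true.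
  have : ev t \in S := enum_valP t; rewrite /S inE; move/cleP: ab => /(_ (ev t)).
  exact: bool_aux.
exists #|S|, (fun x => proj S (f x)), (fill S a).
split; [split; [split|] | split; [split; [split|]|]].
- by move=> x y /mono /proj_mono.
- move=> x z xz; have [c [d [cd E]]] := intv x z xz.
  exists (proj S c), (proj S d); split; first exact: proj_mono.
  apply/setP => w; rewrite intvE; apply/imsetP/andP.
    case=> y yxz ->; have : f y \in interval c d by rewrite -E; apply: imset_f.
    by rewrite intvE => /andP[h1 h2]; rewrite !proj_mono.
  case=> h1 h2.
  have : fill S c w \in f @: interval x z by rewrite E intvE fill_ge fill_le.
  by case/imsetP => y yxz e; exists y => //; rewrite -e proj_fill.
- move=> w.
  have : fill S a w \in f @: interval (bot m) (top m).
    rewrite Himg intvE fill_ge fill_le //; apply/cleP => t _; rewrite ffunE; exact: (F2 t).2.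
  case/imsetP => x _ e; exists x; rewrite -e proj_fill //.
  by apply/cleP => t; rewrite ffunE (F2 t).1.
- by move=> u v; apply: fill_mono.
- move=> u v uv; exists (fill S a u), (fill S a v); split; first exact: fill_mono.
  apply/setP => e; rewrite intvE; apply/imsetP/andP.
    by case=> y; rewrite intvE => /andP[h1 h2] ->; rewrite !fill_mono.
  case=> /cleP h1 /cleP h2; exists (proj S e).
    rewrite intvE; apply/andP; split; apply/cleP => t; rewrite ffunE.
      by move=> ut; apply: h1; rewrite fill_ev ut orbT.
    by move/h2; rewrite fill_ev (F2 t).1.
  apply/ffunP => j; case: (boolP (j \in S)) => jS.
    by have [t <-] := in_S jS; rewrite fill_ev (F2 t).1 ffunE.
  rewrite fill_out //; move: (h1 j) (h2 j); rewrite !fill_out //.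
  by move=> p q; apply: bool_eq.
- move=> u v e; apply/ffunP => t.
  by have := congr1 (fun g : cube n => g (ev t)) e; rewrite /= !fill_ev (F2 t).1.
- move=> x; apply/ffunP => j; case: (boolP (j \in S)) => jS.
    by have [t <-] := in_S jS; rewrite fill_ev (F2 t).1 ffunE.
  rewrite fill_out //; move: jS; rewrite inE negbK => /eqP abj.
  move: (F1 x) => /andP[/cleP h1 /cleP h2]; move: (h1 j) (h2 j); rewrite abj.
  by move=> p q; apply: bool_eq.
Qed.

Lemma card_cube n : #|cube n| = 2 ^ n.
Proof. by rewrite /cube card_ffun card_bool card_ord. Qed.

Lemma mor_mono m n (f : cube m -> cube n) : box_mor f -> forall x y, cle x y -> cle (f x) (f y).
Proof. by case. Qed.

Theorem mainTheorem11 :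
  gen_reedy_box
    (fun m n (f : cube m -> cube n) => box_mor f /\ surj f)
    (fun m n (f : cube m -> cube n) => box_mor f /\ injective f)
    (fun n => n).
Proof.
have idm n : box_mor (fun x : cube n => x).
  split=> // x z xz; exists x, z; split=> //; exact: imset_id.
have compm m n p (f : cube m -> cube n) (g : cube n -> cube p) :
    box_mor f -> box_mor g -> box_mor (fun x => g (f x)).
  move=> [mf If] [mg Ig]; split; first by move=> x y /mf /mg.
  move=> x z xz; have [a [b [ab E]]] := If x z xz.
  have [c [d [cd E']]] := Ig a b ab; exists c, d; split=> //.
  by rewrite -E' -E -imset_comp.
have isoP m n (f : cube m -> cube n) : box_mor f -> surj f -> injective f -> box_iso f.
  move=> bf sf inj; split=> //; exists (rinv f).
  have gK := rinvK sf.
  have fK : cancel f (rinv f) by move=> x; apply: inj; rewrite gK.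
  split; last by [].
  apply: (iso_mor (g := f)) => //; last exact: mor_mono.
  by move=> x y h; apply: (refl_mono bf sf inj); rewrite !gK.
refine (conj _ (conj _ (conj _ (conj _ (conj _ (conj _ (conj _ (conj _ (conj _ (conj _ (conj _ (conj _ (conj _ (conj _ (conj _ _))))))))))))))).
- exact: idm.
- exact: compm.
- by move=> n; split; [exact: idm | move=> y; exists y].
- by move=> n; split; [exact: idm | by []].
- by move=> m n f g H; rewrite (functional_extensionality _ _ H).
- by move=> m n f [].
- by move=> m n f [].
- move=> m n p f g [bf sf] [bg sg]; split; first exact: compm.
  move=> z; have [y <-] := sg z; have [x <-] := sf y; by exists x.
- move=> m n p f g [bf sf] [bg sg]; split; first exact: compm.
  by move=> x y /sg /sf.
- move=> m n f bf; split; first by move=> [[_ sf] [_ inj]]; exact: isoP.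
  move=> [_ [g [_ [fK gK]]]]; split; split=> //; last exact: can_inj fK.
  by move=> y; exists (g y).
- move=> m n f [_ sf] /=.
  have inj : injective (rinv f) := can_inj (rinvK sf).
  by have := leq_card _ inj; rewrite !card_cube leq_exp2l.
- move=> m n f [_ inj] /=.
  by have := leq_card _ inj; rewrite !card_cube leq_exp2l.
- move=> m n f H /= e; subst n; case: H => [[bf sf]|[bf inj]]; split; split=> //.
    have inj : injective (rinv f) := can_inj (rinvK sf).
    have [h hK Kh] := injF_bij inj.
    move=> x y e; rewrite -(Kh x) -(Kh y); congr (rinv f _).
    by rewrite -(rinvK sf (h x)) -(rinvK sf (h y)) !Kh e.
  have [h hK Kh] := injF_bij inj.
  by move=> y; exists (h y).
- by move=> m n zeta gamma [_ sz] _ H y; have [x <-] := sz y.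
- move=> m n f bf; have [k [p [i [Hp [Hi E]]]]] := factor bf.
  by exists k, p, i.
- move=> m n k k' p i p' i' [bp sp] [bi ii] [bp' sp'] [bi' ii'] E.
  have thK x : p' (rinv p (p x)) = p' x.
    by apply: ii'; rewrite -!E rinvK.
  have th'K x : p (rinv p' (p' x)) = p x.
    by apply: ii; rewrite !E rinvK.
  have mth y1 y2 : cle y1 y2 -> cle (p' (rinv p y1)) (p' (rinv p y2)).
    move=> h; have hh : cle (p (rinv p y1)) y2 by rewrite rinvK.
    have [x2 [h1 h2]] := lift_le bp sp hh.
    by rewrite -h2 thK; apply: mor_mono h1.
  have mth' y1 y2 : cle y1 y2 -> cle (p (rinv p' y1)) (p (rinv p' y2)).
    move=> h; have hh : cle (p' (rinv p' y1)) y2 by rewrite rinvK.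
    have [x2 [h1 h2]] := lift_le bp' sp' hh.
    by rewrite -h2 th'K; apply: mor_mono h1.
  have c1 : cancel (fun y => p' (rinv p y)) (fun y => p (rinv p' y)).
    by move=> y; rewrite th'K rinvK.
  have c2 : cancel (fun y => p (rinv p' y)) (fun y => p' (rinv p y)).
    by move=> y; rewrite thK rinvK.
  exists (fun y => p' (rinv p y)); split; [split|split].
  + exact: iso_mor mth mth' c1 c2.
  + exists (fun y => p (rinv p' y)); split=> //; exact: iso_mor mth' mth c2 c1.
  + exact: thK.
  + by move=> y; rewrite -E rinvK.
Qed.
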